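(* For $n\ge2$, the number of permutations of $\{1,\dots,n\}$ that avoid both $1243$ and $1324$ and in which entry $1$ appears to the left of entry $n$ (in one-line notation) equals \[ \binom{2n-3}{n-1}. \]
   Context: A permutation avoids a pattern $p$ if no subsequence of its one-line notation is order-isomorphic to $p$. *)

(* Defs.v *)
From mathcomp Require Import all_boot all_order all_fingroup.
Set Implicit Arguments. Unset Strict Implicit. Unset Printing Implicit Defensive.

(* Permutations of {1..n} are modelled as {perm 'I_n} (values 0..n-1);
   one-line notation: position i (0-based) holds value s i. *)

Definition contains_pat (n : nat) (s : {perm 'I_n}) (p : seq nat) : bool :=
  [exists f : {ffun 'I_(size p) -> 'I_n},
    [forall a : 'I_(size p), forall b : 'I_(size p),
       ((a < b)%N ==> (f a < f b)%N) &&
       ((s (f a) < s (f b))%N == (nth 0 p a < nth 0 p b)%N)]].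

Definition avoids (n : nat) (s : {perm 'I_n}) (p : seq nat) : bool :=
  ~~ contains_pat s p.

Definition pos (n : nat) (s : {perm 'I_n}) (v : 'I_n) : nat := (s^-1)%g v.

(* Main.v *)
Require Import Defs.
From mathcomp Require Import all_boot all_order all_fingroup zify.
Set Implicit Arguments. Unset Strict Implicit. Unset Printing Implicit Defensive.

Fixpoint pat2 (P : nat -> nat -> bool) (s : seq nat) : bool :=
  if s is x :: s' then has (P x) s' || pat2 P s' else false.
Fixpoint pat3 (P : nat -> nat -> nat -> bool) (s : seq nat) : bool :=
  if s is x :: s' then pat2 (P x) s' || pat3 P s' else false.
Fixpoint pat4 (P : nat -> nat -> nat -> nat -> bool) (s : seq nat) : bool :=
  if s is x :: s' then pat3 (P x) s' || pat4 P s' else false.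

Lemma pat2_mono (P P' : nat -> nat -> bool) s :
  (forall a b, P a b -> P' a b) -> pat2 P s -> pat2 P' s.
Proof.
move=> H; elim: s => //= x s IH /orP[/hasP[y ys Py]|/IH ->]; last by rewrite orbT.
by apply/orP; left; apply/hasP; exists y => //; apply: H.
Qed.

Lemma pat3_mono (P P' : nat -> nat -> nat -> bool) s :
  (forall a b c, P a b c -> P' a b c) -> pat3 P s -> pat3 P' s.
Proof.
move=> H; elim: s => //= x s IH /orP[H2|/IH ->]; last by rewrite orbT.
by rewrite (pat2_mono _ H2) // => a b; apply: H.
Qed.

Lemma pat4_mono (P P' : nat -> nat -> nat -> nat -> bool) s :
  (forall a b c d, P a b c d -> P' a b c d) -> pat4 P s -> pat4 P' s.
Proof.
move=> H; elim: s => //= x s IH /orP[H2|/IH ->]; last by rewrite orbT.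
by rewrite (pat3_mono _ H2) // => a b c; apply: H.
Qed.

Lemma eq_pat2 (P P' : nat -> nat -> bool) s :
  (forall a b, P a b = P' a b) -> pat2 P s = pat2 P' s.
Proof. by move=> H; apply/idP/idP; apply: pat2_mono => a b; rewrite H. Qed.
Lemma eq_pat3 (P P' : nat -> nat -> nat -> bool) s :
  (forall a b c, P a b c = P' a b c) -> pat3 P s = pat3 P' s.
Proof. by move=> H; apply/idP/idP; apply: pat3_mono => a b c; rewrite H. Qed.
Lemma eq_pat4 (P P' : nat -> nat -> nat -> nat -> bool) s :
  (forall a b c d, P a b c d = P' a b c d) -> pat4 P s = pat4 P' s.
Proof. by move=> H; apply/idP/idP; apply: pat4_mono => a b c d; rewrite H. Qed.

Lemma pat2_map (P : nat -> nat -> bool) (f : nat -> nat) s : pat2 P (map f s) = pat2 (fun a b => P (f a) (f b)) s.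
Proof. by elim: s => //= x s ->; rewrite has_map. Qed.
Lemma pat3_map (P : nat -> nat -> nat -> bool) (f : nat -> nat) s : pat3 P (map f s) = pat3 (fun a b c => P (f a) (f b) (f c)) s.
Proof. by elim: s => //= x s ->; rewrite pat2_map. Qed.
Lemma pat4_map (P : nat -> nat -> nat -> nat -> bool) (f : nat -> nat) s :
  pat4 P (map f s) = pat4 (fun a b c d => P (f a) (f b) (f c) (f d)) s.
Proof. by elim: s => //= x s ->; rewrite pat3_map. Qed.

Lemma pat2_or (P P' : nat -> nat -> bool) s : pat2 (fun a b => P a b || P' a b) s = pat2 P s || pat2 P' s.
Proof.
elim: s => //= x s ->; rewrite has_predU.
by case: (has _ _); case: (has _ _); case: (pat2 P s); case: (pat2 P' s).
Qed.
Lemma pat3_or (P P' : nat -> nat -> nat -> bool) s :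
  pat3 (fun a b c => P a b c || P' a b c) s = pat3 P s || pat3 P' s.
Proof.
elim: s => //= x s ->; rewrite pat2_or.
by case: (pat2 _ _); case: (pat2 _ _); case: (pat3 P s); case: (pat3 P' s).
Qed.

Lemma pat2P (P : nat -> nat -> bool) s :
  reflect (exists a b, [/\ a < b, b < size s & P (nth 0 s a) (nth 0 s b)])
          (pat2 P s).
Proof.
elim: s => [|x s IH] /=; first by apply: ReflectF => -[a [b []]].
apply: (iffP orP).
- case=> [/hasP[y /(nthP 0)[j js <-] Py]|/IH[a [b [ab bs Pab]]]].
    by exists 0, j.+1.
  by exists a.+1, b.+1.
- case=> [[|a] [[|b] [//= ab bs Pab]]].
    by left; apply/hasP; exists (nth 0 s b) => //; apply: mem_nth.
  by right; apply/IH; exists a, b.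
Qed.

Lemma pat3P (P : nat -> nat -> nat -> bool) s :
  reflect (exists a b c, [/\ a < b, b < c, c < size s &
             P (nth 0 s a) (nth 0 s b) (nth 0 s c)]) (pat3 P s).
Proof.
elim: s => [|x s IH] /=; first by apply: ReflectF => -[a [b [c []]]].
apply: (iffP orP).
- case=> [/pat2P[b [c [bc cs Pbc]]]|/IH[a [b [c [ab bc cs Pabc]]]]].
    by exists 0, b.+1, c.+1.
  by exists a.+1, b.+1, c.+1.
- case=> [[|a] [[|b] [[|c] [//= ab bc cs Pabc]]]].
    by left; apply/pat2P; exists b, c.
  by right; apply/IH; exists a, b, c.
Qed.

Lemma pat4P (P : nat -> nat -> nat -> nat -> bool) s :
  reflect (exists a b c d, [/\ a < b, b < c, c < d, d < size s &
             P (nth 0 s a) (nth 0 s b) (nth 0 s c) (nth 0 s d)]) (pat4 P s).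
Proof.
elim: s => [|x s IH] /=; first by apply: ReflectF => -[a [b [c [d []]]]].
apply: (iffP orP).
- case=> [/pat3P[b [c [d [bc cd ds Pbcd]]]]|/IH[a [b [c [d [ab bc cd ds P4]]]]]].
    by exists 0, b.+1, c.+1, d.+1.
  by exists a.+1, b.+1, c.+1, d.+1.
- case=> [[|a] [[|b] [[|c] [[|d] [//= ab bc cd ds P4]]]]].
    by left; apply/pat3P; exists b, c, d.
  by right; apply/IH; exists a, b, c, d.
Qed.

Definition sh (x y : nat) : nat := y + (x <= y).
Definition R132 (y a b c : nat) : bool := [&& y <= a, a < c & c < b].
Definition R213 (y a b c : nat) : bool := [&& y <= b, b < a & a < c].
Definition Qb (y : nat) (s : seq nat) : bool :=
  ~~ pat3 (R132 y) s && ~~ pat3 (R213 y) s.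
Definition Incb (x : nat) (s : seq nat) : bool :=
  ~~ pat2 (fun a b => (x <= b) && (b < a)) s.
Definition Precb (y x : nat) (s : seq nat) : bool :=
  ~~ pat2 (fun a b => [&& y <= a, a < x & x <= b]) s.
Definition P1243 (a b c d : nat) : bool := [&& a < b, b < d & d < c].
Definition P1324 (a b c d : nat) : bool := [&& a < c, c < b & b < d].
Definition good (s : seq nat) : bool := ~~ pat4 P1243 s && ~~ pat4 P1324 s.

Lemma good_cons x u : good (x :: map (sh x) u) = good u && Qb x u.
Proof.
rewrite /good /Qb /= !pat4_map !pat3_map.
rewrite (@eq_pat4 (fun a b c d => P1243 (sh x a) (sh x b) (sh x c) (sh x d)) P1243); last by move=> *; rewrite /P1243 /sh; lia.
rewrite (@eq_pat4 (fun a b c d => P1324 (sh x a) (sh x b) (sh x c) (sh x d)) P1324); last by move=> *; rewrite /P1324 /sh; lia.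
rewrite (@eq_pat3 (fun b c d => P1243 x (sh x b) (sh x c) (sh x d)) (R132 x)); last by move=> *; rewrite /P1243 /R132 /sh; lia.
rewrite (@eq_pat3 (fun b c d => P1324 x (sh x b) (sh x c) (sh x d)) (R213 x)); last by move=> *; rewrite /P1324 /R213 /sh; lia.
by case: (pat4 P1243 u); case: (pat4 P1324 u); case: (pat3 (R132 x) u);
   case: (pat3 (R213 x) u).
Qed.

Lemma Qb_cons_le y x u : y <= x ->
  Qb y (x :: map (sh x) u) = [&& Qb y u, Incb x u & Precb y x u].
Proof.
move=> yx; rewrite /Qb /Incb /Precb /= !pat3_map !pat2_map.
rewrite (@eq_pat3 (fun a b c => R132 y (sh x a) (sh x b) (sh x c)) (R132 y)); last by move=> *; rewrite /R132 /sh; lia.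
rewrite (@eq_pat3 (fun a b c => R213 y (sh x a) (sh x b) (sh x c)) (R213 y)); last by move=> *; rewrite /R213 /sh; lia.
rewrite (@eq_pat2 (fun b c => R132 y x (sh x b) (sh x c)) (fun a b => (x <= b) && (b < a))); last first.
  by move=> *; rewrite /R132 /sh; lia.
rewrite (@eq_pat2 (fun b c => R213 y x (sh x b) (sh x c)) (fun a b => [&& y <= a, a < x & x <= b])); last first.
  by move=> *; rewrite /R213 /sh; lia.
by case: (pat3 (R132 y) u); case: (pat3 (R213 y) u); case: (pat2 _ u);
   case: (pat2 _ u).
Qed.

Lemma Qb_cons_gt y x u : x < y ->
  Qb y (x :: map (sh x) u) = Qb y.-1 u.
Proof.
move=> xy; rewrite /Qb /= !pat3_map !pat2_map.
rewrite (@eq_pat3 (fun a b c => R132 y (sh x a) (sh x b) (sh x c)) (R132 y.-1)); last by move=> *; rewrite /R132 /sh; lia.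
rewrite (@eq_pat3 (fun a b c => R213 y (sh x a) (sh x b) (sh x c)) (R213 y.-1)); last by move=> *; rewrite /R213 /sh; lia.
rewrite (@eq_pat2 (fun b c => R132 y x (sh x b) (sh x c)) (fun _ _ => false)); last by move=> *; rewrite /R132 /sh; lia.
rewrite (@eq_pat2 (fun b c => R213 y x (sh x b) (sh x c)) (fun _ _ => false)); last first.
  by move=> *; rewrite /R213 /sh; lia.
have -> : forall s, pat2 (fun _ _ => false) s = false by elim=> //= ? ? ->; rewrite has_pred0.
by [].
Qed.

Lemma Qb_mono y y' s : y <= y' -> Qb y s -> Qb y' s.
Proof.
move=> yy /andP[H1 H2]; apply/andP; split.
  by apply: contra H1; apply: pat3_mono => a b c; rewrite /R132; lia.
by apply: contra H2; apply: pat3_mono => a b c; rewrite /R213; lia.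
Qed.

Lemma Incb_mono x x' s : x <= x' -> Incb x s -> Incb x' s.
Proof. by move=> xx; apply: contra; apply: pat2_mono => a b; lia. Qed.

Lemma Precb_mono y y' x s : y <= y' -> Precb y x s -> Precb y' x s.
Proof. by move=> yy; apply: contra; apply: pat2_mono => a b; lia. Qed.

Fixpoint perms_w (m : nat) : seq (seq nat) :=
  if m is m'.+1 then [seq x :: map (sh x) u | x <- iota 0 m'.+1, u <- perms_w m']
  else [:: [::]].

Lemma perms_wS m :
  perms_w m.+1 = [seq x :: map (sh x) u | x <- iota 0 m.+1, u <- perms_w m].
Proof. by []. Qed.

Definition unsh (x y : nat) : nat := y - (x < y).

Lemma sh_inj x : injective (sh x).
Proof. by move=> a b; rewrite /sh; lia. Qed.

Lemma perms_wP m w :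
  (w \in perms_w m) = [&& size w == m, uniq w & all (fun v => v < m) w].
Proof.
elim: m w => [|m IH] w.
  by rewrite /= inE; case: w.
rewrite perms_wS; apply/idP/idP.
- move=> /allpairsP[[x u] /= [xi ui ->]].
  move: ui; rewrite IH => /and3P[/eqP su uu au].
  have xi2 : x < m.+1 by move: xi; rewrite -[0 :: _]/(iota 0 m.+1) mem_iota.
  rewrite /= size_map su eqxx /= (map_inj_uniq (@sh_inj x)) uu andbT.
  apply/andP; split.
    apply/mapP => -[v _]; rewrite /sh; lia.
  apply/andP; split; first by move: xi2; lia.
  apply/allP => _ /mapP[v vu ->]; move/allP: au => /(_ v vu); rewrite /sh; lia.
- case: w => // x u /and3P[/eqP[su] /andP[xu uu] /andP[xm au]].
  apply/allpairsP; exists (x, map (unsh x) u); split => /=.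
  + by rewrite -[0 :: _]/(iota 0 m.+1) mem_iota.
  + rewrite IH size_map su eqxx /=; apply/andP; split.
      rewrite map_inj_in_uniq // => a b au' bu'.
      have ax : a != x by apply: contraNneq xu => <-.
      have bx : b != x by apply: contraNneq xu => <-.
      move: ax bx; rewrite /unsh; lia.
    apply/allP => _ /mapP[v vu ->].
    have vx : v != x by apply: contraNneq xu => <-.
    move/allP: au => /(_ v vu); move: vx; rewrite /unsh; lia.
  + congr (_ :: _); rewrite -map_comp -[LHS]map_id; apply/eq_in_map => v vu /=.
    have vx : v != x by apply: contraNneq xu => <-.
    move: vx; rewrite /sh /unsh; lia.
Qed.

Lemma perms_w_uniq m : uniq (perms_w m).
Proof.
elim: m => // m IH; rewrite perms_wS; apply: allpairs_uniq => //; first exact: iota_uniq.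
by move=> [x u] [y v] _ _ /= [<-] /(inj_map (@sh_inj x)) ->.
Qed.

Lemma size_perms_w m : size (perms_w m) = m`!.
Proof.
by elim: m => // m IH; rewrite perms_wS size_allpairs size_iota IH factS.
Qed.

Section PermFacts.
Variables (m : nat) (u : seq nat).
Hypothesis up : u \in perms_w m.

Lemma pw_size : size u = m.
Proof. by move: up; rewrite perms_wP => /and3P[/eqP]. Qed.
Lemma pw_uniq : uniq u.
Proof. by move: up; rewrite perms_wP => /and3P[]. Qed.
Lemma pw_all : all (fun v => v < m) u.
Proof. by move: up; rewrite perms_wP => /and3P[]. Qed.
Lemma pw_lt i : i < size u -> nth 0 u i < m.
Proof. by move=> iu; move/allP: pw_all; apply; apply: mem_nth. Qed.
Lemma pw_mem v : (v \in u) = (v < m).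
Proof.
have := @uniq_min_size _ u (iota 0 m) pw_uniq.
case.
- by move=> x /(allP pw_all); rewrite mem_iota.
- by rewrite size_iota pw_size.
by move=> _ /(_ v); rewrite mem_iota.
Qed.

Lemma Incb_top : Incb m.-1 u.
Proof.
apply/pat2P => -[a [b [ab bs]]].
have := pw_lt (ltn_trans ab bs); have := pw_lt bs; lia.
Qed.

Lemma Precb_top y : Precb y m u.
Proof. apply/pat2P => -[a [b [ab bs]]]; have := pw_lt bs; lia. Qed.

Lemma Qb_top : Qb m u.
Proof.
apply/andP; split; apply/pat3P => -[a [b [c [ab bc cs]]]].
  have := pw_lt (ltn_trans ab (ltn_trans bc cs)); have := pw_lt (ltn_trans bc cs);
  rewrite /R132; lia.
have := pw_lt (ltn_trans bc cs); have := pw_lt cs; rewrite /R213; lia.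
Qed.

Lemma not_Prec x : 0 < x -> x < m -> Incb x.-1 u -> ~~ Precb x.-1 x u.
Proof.
move=> x0 xm Hinc; rewrite /Precb negbK.
have m1 : m.-1 \in u by rewrite pw_mem; lia.
have x1 : x.-1 \in u by rewrite pw_mem; lia.
set a := index x.-1 u; set b := index m.-1 u.
have ua : nth 0 u a = x.-1 by apply: nth_index.
have ub : nth 0 u b = m.-1 by apply: nth_index.
have as_ : a < size u by rewrite index_mem.
have bs : b < size u by rewrite index_mem.
have : a != b by apply/eqP => ab; move: ua ub; rewrite ab => ->; lia.
case: (ltngtP a b) => // [ab|ba] _.
  by apply/pat2P; exists a, b; rewrite ua ub; split => //; lia.
move: Hinc; rewrite /Incb => /negP; case; apply/pat2P; exists b, a.
by rewrite ua ub; split => //; lia.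
Qed.
End PermFacts.

Lemma Prec_from u y x : uniq u -> Qb y u -> ~~ Incb x.-1 u -> Incb x u ->
  y <= x -> 0 < x -> Precb y x u.
Proof.
move=> uu /andP[Q1 Q2]; rewrite /Incb negbK => /pat2P[c [d [cd ds Hcd]]] Hx yx x0.
have cs : c < size u by apply: ltn_trans ds.
have Ed : nth 0 u d = x.-1.
  apply/eqP; rewrite eqn_leq; move: Hcd => /andP[H1 H2]; rewrite H1 andbT.
  move: Hx => /negP Hx; rewrite leqNgt; apply/negP => H3; apply: Hx.
  by apply/pat2P; exists c, d; split => //; apply/andP; split => //; lia.
apply/negP => /pat2P[a [b [ab bs /and3P[ya ax xb]]]].
have as_ : a < size u by apply: ltn_trans bs.
have Hinc2 : forall i j, i < j -> j < size u -> x <= nth 0 u j -> nth 0 u j < nth 0 u i -> False.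
  move=> i j ij js H1 H2; move/negP: Hx; apply; apply/pat2P; exists i, j.
  by split => //; apply/andP.
have neq : forall i j, i < size u -> j < size u -> nth 0 u i = nth 0 u j -> i = j.
  by move=> i j iu ju E; apply/eqP; rewrite -(nth_uniq 0 iu ju uu); apply/eqP.
have [ac|ca|ac] := ltngtP a c.
-
  have [Ead|Nad] := eqVneq (nth 0 u a) (nth 0 u d).
    by have := neq _ _ as_ ds Ead; lia.
  move/negP: Q1; apply; apply/pat3P; exists a, c, d; split => //.
  by rewrite /R132; move: Hcd Nad; rewrite Ed; lia.
-
  have [Ecb|Ncb] := eqVneq (nth 0 u c) (nth 0 u b).
    by have := neq _ _ cs bs Ecb; lia.
  have [lcb|lbc|E] := ltngtP (nth 0 u c) (nth 0 u b).
  + move/negP: Q2; apply; apply/pat3P; exists c, a, b; split => //.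
    by rewrite /R213; move: Hcd; rewrite Ed; lia.
  + by apply: (Hinc2 c b) => //; lia.
  + by move: Ncb; rewrite E eqxx.
- by move: Hcd ax; rewrite ac Ed; lia.
Qed.

Definition inS (w : seq nat) : bool := good w && (index 0 w < index (size w).-1 w).
Definition isQ (w : seq nat) : bool := good w && Qb 0 w.
Definition lam (w : seq nat) : nat := count (fun y => Qb y w) (iota 1 (size w).-1).

Lemma count_up (P : pred nat) a n :
  (forall y, a <= y -> P y -> P y.+1) ->
  forall y, a <= y < a + n -> P y = (a + n - count P (iota a n) <= y).
Proof.
elim: n a => [|n IH] a Hup y; first by lia.
rewrite /= => Hy.
case Pa: (P a).
- have allP' : forall z, a <= z -> P z.
    move=> z az; elim: z az => [|z IHz]; first by rewrite leqn0 => /eqP <-.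
    rewrite leq_eqVlt => /orP[/eqP <- //|]; rewrite ltnS => az.
    by apply: Hup => //; apply: IHz.
  have -> : count P (iota a.+1 n) = n.
    rewrite (eq_in_count (a2 := predT)) ?count_predT ?size_iota //.
    by move=> z; rewrite mem_iota => /andP[az _]; apply: allP'; lia.
  rewrite allP'; [lia | lia].
- have [ya|ya] := eqVneq y a.
    have := count_size P (iota a.+1 n); rewrite size_iota ya Pa; lia.
  rewrite (IH a.+1); first by rewrite add0n; apply/idP/idP; lia.
    by move=> z az; apply: Hup; lia.
  lia.
Qed.

Lemma iota_r a k : iota a k.+1 = iota a k ++ [:: a + k].
Proof. by rewrite -addn1 iotaD. Qed.

Lemma count_geq g a n : count (fun y => g <= y) (iota a n) = a + n - maxn a g.
Proof.
elim: n a => [|n IH] a /=; first by lia.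
by rewrite IH; case: leqP => ?; lia.
Qed.

Lemma Precb_refl x u : Precb x x u.
Proof. by apply/negP => /pat2P[a [b [_ _]]]; lia. Qed.

Lemma rev_sum (G : nat -> nat) a n c : a + n <= c.+1 ->
  \sum_(a <= x < a + n) G (c - x) = \sum_(c.+1 - (a + n) <= y < c.+1 - a) G y.
Proof.
elim: n => [|n IH] H; first by rewrite addn0 !big_geq.
rewrite addnS big_nat_recr /=; last by lia.
rewrite IH; last by lia.
rewrite (@big_ltn _ _ _ (c.+1 - (a + n).+1)); last by lia.
have -> : (c.+1 - (a + n).+1).+1 = c.+1 - (a + n) by lia.
have -> : c.+1 - (a + n).+1 = c - (a + n) by lia.
by rewrite addnC.
Qed.

Lemma rev_sum' (G : nat -> nat) a b c : a <= b -> b <= c.+1 ->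
  \sum_(a <= x < b) G (c - x) = \sum_(c.+1 - b <= y < c.+1 - a) G y.
Proof.
move=> ab bc; have -> : b = a + (b - a) by lia.
by rewrite rev_sum //; lia.
Qed.

Lemma inS_mid m u x : u \in perms_w m -> 0 < x -> x < m ->
  inS (x :: map (sh x) u) = inS u && Qb x u.
Proof.
move=> up x0 xm; rewrite /inS good_cons /= size_map (pw_size up).
have -> : (x == 0) = false by lia.
have -> : (x == m) = false by lia.
have E1 : index 0 (map (sh x) u) = index 0 u.
  have s0 : sh x 0 = 0 by rewrite /sh; lia.
  by rewrite -{1}s0 index_map //; exact: sh_inj.
have E2 : index m (map (sh x) u) = index m.-1 u.
  have sm : sh x m.-1 = m by rewrite /sh; lia.
  by rewrite -{1}sm index_map //; exact: sh_inj.
rewrite E1 E2 ltnS; case: (good u); case: (Qb x u); by rewrite /= ?andbT ?andbF.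
Qed.

Lemma inS_zero m u : u \in perms_w m -> 0 < m ->
  inS (0 :: map (sh 0) u) = isQ u.
Proof.
move=> up m0; rewrite /inS /isQ good_cons /= size_map (pw_size up).
have -> : (0 == m) = false by lia.
by rewrite andbT.
Qed.

Lemma inS_top m u : u \in perms_w m -> 0 < m ->
  inS (m :: map (sh m) u) = false.
Proof.
move=> up m0; rewrite /inS /= size_map (pw_size up) eqxx.
by rewrite ltn0 andbF.
Qed.

Lemma lam_zero m u : u \in perms_w m -> isQ u -> lam (0 :: map (sh 0) u) = m.
Proof.
move=> up /andP[_ Q0]; rewrite /lam /= size_map (pw_size up).
rewrite (eq_in_count (a2 := predT)) ?count_predT ?size_iota //.
move=> y; rewrite mem_iota => /andP[y1 _].
by rewrite Qb_cons_gt //; apply: Qb_mono Q0.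
Qed.

Lemma lam_le u : lam u <= (size u).-1.
Proof. by rewrite /lam; have := count_size (fun y => Qb y u) (iota 1 (size u).-1); rewrite size_iota. Qed.

Lemma Qb_char m u y : u \in perms_w m -> 0 < y -> y <= m ->
  Qb y u = (m - lam u <= y).
Proof.
move=> up y0 ym.
have := lam_le u; rewrite (pw_size up) => lm.
have [ym'|ym'] := eqVneq y m.
  by rewrite ym' (Qb_top up); lia.
rewrite /lam (pw_size up) (@count_up (fun y => Qb y u) 1 m.-1).
- by have -> : 1 + m.-1 = m by lia.
- by move=> z _; apply: Qb_mono.
- lia.
Qed.

Definition xi (u : seq nat) : nat := size u - count (fun x => Incb x u) (iota 0 (size u)).

Lemma Incb_char m u x : u \in perms_w m -> x < m -> Incb x u = (xi u <= x).
Proof.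
move=> up xm; rewrite /xi (pw_size up) (@count_up (fun x => Incb x u) 0 m) //.
by move=> z _; apply: Incb_mono.
Qed.

Lemma xi_lt m u : u \in perms_w m -> 0 < m -> xi u < m.
Proof.
move=> up m0; have := Incb_char up (x := m.-1).
rewrite (Incb_top up) => /(_ ltac:(lia)) H.
have : xi u <= m.-1 by rewrite -H.
lia.
Qed.

Lemma lam_child m u x : u \in perms_w m -> m - lam u <= x -> x < m -> 0 < x ->
  lam (x :: map (sh x) u) =
  if ~~ Incb x u then m - x else if Incb x.-1 u then (m - x).+1 else (lam u).+1.
Proof.
move=> up gx xm x0.
have lm : lam u <= m.-1 by have := lam_le u; rewrite (pw_size up).
rewrite {1}/lam /= size_map (pw_size up).
have -> : m = x + (m - x) by lia.
rewrite iotaD count_cat.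
have -> : x + (m - x) = m by lia.
have -> : count (fun y => Qb y (x :: [seq sh x i | i <- u])) (iota (1 + x) (m - x))
          = m - x.
  rewrite (eq_in_count (a2 := predT)) ?count_predT ?size_iota //.
  move=> y; rewrite mem_iota => /andP[y1 y2].
  rewrite Qb_cons_gt; last by lia.
  rewrite (Qb_char up) /=; lia.
rewrite (eq_in_count (a2 := fun y => [&& Qb y u, Incb x u & Precb y x u])); last first.
  by move=> y; rewrite mem_iota => /andP[y1 y2]; rewrite Qb_cons_le //; lia.
case Ix: (Incb x u) => /=; last first.
  by rewrite (eq_in_count (a2 := pred0)) ?count_pred0 ?addn0 // => y _; rewrite andbF.
case Ix1: (Incb x.-1 u).
- have Ei : iota 1 x = iota 1 x.-1 ++ [:: x].
    by rewrite -{1}(prednK x0) iota_r add1n prednK.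
  rewrite Ei count_cat /= (eq_in_count (a2 := pred0)) ?count_pred0; last first.
    move=> y; rewrite mem_iota => /andP[y1 y2] /=.
    apply/negP => /andP[_ Hp].
    have : Precb x.-1 x u by apply: Precb_mono Hp; lia.
    by have := not_Prec up x0 xm Ix1 => /negP.
  rewrite Precb_refl (Qb_char up) //; last by lia.
  have -> : m - lam u <= x by [].
  lia.
- rewrite (eq_in_count (a2 := fun y => m - lam u <= y)); last first.
    move=> y; rewrite mem_iota => /andP[y1 y2].
    rewrite (Qb_char up) //; last by lia.
    case: leqP => //= gy.
    apply: (Prec_from (pw_uniq up)) => //; try lia.
      by rewrite (Qb_char up); lia.
  rewrite count_geq; lia.
Qed.

Lemma sum_children (G : nat -> nat) m u : u \in perms_w m -> 0 < m ->
  \sum_(x <- iota 1 m.-1 | Qb x u) G (lam (x :: map (sh x) u)) =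
  \sum_(2 <= k < (lam u).+2) G k.
Proof.
move=> up m0.
have lm : lam u <= m.-1 by have := lam_le u; rewrite (pw_size up).
have [k kE] : {k | lam u = k} by exists (lam u).
rewrite kE.
set g := m - k.
have gE : g = m - k := erefl.
clearbody g.
have Ei : iota 1 m.-1 = iota 1 g.-1 ++ iota g (m - g).
  have -> : iota g (m - g) = iota (1 + g.-1) (m - g) by congr iota; lia.
  by rewrite -iotaD; congr iota; lia.
rewrite Ei big_cat /= [X in X + _]big_seq_cond big_pred0 ?add0n; last first.
  move=> x /=; rewrite mem_iota; case: (boolP (1 <= x < 1 + g.-1)) => //= /andP[x1 x2].
  by rewrite (Qb_char up) //; lia.
rewrite big_seq_cond (eq_bigl (fun x => x \in iota g (m - g))); last first.
  move=> x /=; case: (boolP (x \in iota g (m - g))) => //=; rewrite mem_iota => /andP[x1 x2].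
  by rewrite (Qb_char up); lia.
rewrite -big_seq.
have -> : iota g (m - g) = index_iota g m by [].
pose phi x := if ~~ (xi u <= x) then m - x else if xi u <= x.-1 then (m - x).+1 else k.+1.
rewrite [LHS](eq_big_nat _ _ (F2 := fun x => G (phi x))); last first.
  move=> x /andP[gx xm]; rewrite (lam_child up); try lia.
  rewrite /phi (Incb_char up (x:=x)); last lia.
  rewrite (Incb_char up (x:=x.-1)); last lia.
  by rewrite kE.
have xim := xi_lt up m0.
have [xig|gxi] := ltnP (xi u) g.
- rewrite (eq_big_nat _ _ (F1 := fun x => G (phi x)) (F2 := fun x => G (m.+1 - x))); last first.
    by move=> x /andP[gx xm]; rewrite /phi; congr G; case: (leqP (xi u) x) => /= ?; [case: (leqP (xi u) x.-1) => /= ?|]; lia.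
  rewrite rev_sum'; try lia.
  have -> : m.+2 - m = 2 by lia.
  by have -> : m.+2 - g = k.+2 by lia.
- rewrite (big_cat_nat _ (n := xi u)) //=; last by lia.
  rewrite (big_cat_nat _ (n := (xi u).+1) (m := xi u)) //= big_nat1.
  rewrite (eq_big_nat _ _ (F1 := fun x => G (phi x)) (F2 := fun x => G (m - x))); last first.
    by move=> x /andP[gx xm]; rewrite /phi; congr G; case: (leqP (xi u) x) => /= ?; [case: (leqP (xi u) x.-1) => /= ?|]; lia.
  rewrite [in X in _ + (_ + X)](eq_big_nat _ _ (F1 := fun x => G (phi x)) (F2 := fun x => G (m.+1 - x))); last first.
    by move=> x /andP[gx xm]; rewrite /phi; congr G; case: (leqP (xi u) x) => /= ?; [case: (leqP (xi u) x.-1) => /= ?|]; lia.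
  have -> : phi (xi u) = k.+1.
    by rewrite /phi leqnn /=; case: (leqP (xi u) (xi u).-1) => //; lia.
  rewrite rev_sum' //; last by lia.
  rewrite rev_sum'; try lia.
  rewrite (big_cat_nat _ (n := m.+1 - xi u) (m := 2)); try lia.
  rewrite (big_cat_nat _ (n := k.+1) (m := m.+1 - xi u)); try lia.
  rewrite big_nat1.
  have -> : m.+1 - g = k.+1 by lia.
  have -> : m.+2 - m = 2 by lia.
  have -> : m.+2 - (xi u).+1 = m.+1 - xi u by lia.
  rewrite /=; lia.
Qed.

Lemma Qcount_x m u : u \in perms_w m -> 0 < m -> Qb 0 u ->
  count (fun x => Incb x u && Precb 0 x u) (iota 0 m.+1) = 2.
Proof.
move=> up m0 Q0.
have xim := xi_lt up m0.
rewrite (eq_in_count (a2 := fun x => (x == xi u) || (x == m))); last first.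
  move=> x; rewrite mem_iota => /andP[_ xm]; rewrite add0n in xm.
  have [->|xnm] := eqVneq x m.
    rewrite orbT (Incb_mono _ (Incb_top up)) ?Precb_top //; lia.
  have xm' : x < m by lia.
  rewrite orbF (Incb_char up) //.
  have [xlt|xge] := ltnP x (xi u).
    by have -> : (x == xi u) = false by lia.
  rewrite /=.
  have [xe|xne] := eqVneq x (xi u).
    rewrite xe; case xi0: (xi u) => [|x'].
      exact: Precb_refl.
    rewrite -xi0; apply: (Prec_from (pw_uniq up)) => //; last by lia.
      by rewrite (Incb_char up); lia.
    by rewrite (Incb_char up).
  case Hp: (Precb 0 x u) => //.
  have Ix1 : Incb x.-1 u by rewrite (Incb_char up); lia.
  have x0 : 0 < x by lia.
  have := not_Prec up x0 xm' Ix1.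
  by rewrite (Precb_mono _ Hp) //; lia.
rewrite iota_r count_cat /= add0n.
rewrite (eq_in_count (a1 := fun x => (x == xi u) || (x == m)) (a2 := pred1 (xi u))); last first.
  move=> x; rewrite mem_iota => /andP[_ xm].
  have -> : (x == m) = false by lia.
  by rewrite orbF.
by rewrite eqxx orbT count_uniq_mem ?iota_uniq // mem_iota xim.
Qed.

Lemma isQ_cons x u : isQ (x :: map (sh x) u) = [&& isQ u, Incb x u & Precb 0 x u].
Proof.
rewrite /isQ good_cons Qb_cons_le //.
case Q0: (Qb 0 u); last by rewrite !andbF.
by rewrite (Qb_mono _ Q0) //= !andbT.
Qed.

Lemma sum_if_count (T : Type) (s : seq T) (P : pred T) :
  \sum_(x <- s) (if P x then 1 else 0) = count P s.
Proof. by rewrite -big_mkcond sum1_count. Qed.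

Lemma countQ m : 0 < m -> count isQ (perms_w m) = 2 ^ m.-1.
Proof.
elim: m => // m IH _.
case: m IH => [|m] IH; first by [].
rewrite -sum_if_count perms_wS big_allpairs_dep exchange_big.
rewrite [(m.+2).-1]/= expnS -IH // -sum_if_count big_distrr.
rewrite big_seq [RHS]big_seq; apply: eq_bigr => u up.
rewrite (eq_bigr (fun x => if isQ u then (if Incb x u && Precb 0 x u then 1 else 0) else 0)); last first.
  by move=> x _; rewrite isQ_cons; case: (isQ u).
case Qu: (isQ u); last by rewrite big1.
rewrite sum_if_count Qcount_x //.
by move: Qu => /andP[].
Qed.

Fixpoint W (L k : nat) : nat :=
  if L is L'.+1 then \sum_(2 <= k' < k.+2) W L' k' else 1.

Definition A (m L : nat) : nat := \sum_(w <- perms_w m | inS w) W L (lam w).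

Lemma A_rec m L : 0 < m -> A m.+1 L = 2 ^ m.-1 * W L m + A m L.+1.
Proof.
move=> m0.
have step : forall u, u \in perms_w m ->
  \sum_(x <- iota 0 m.+1) (if inS (x :: map (sh x) u) then W L (lam (x :: map (sh x) u)) else 0)
  = (if isQ u then W L m else 0) + (if inS u then W L.+1 (lam u) else 0).
  move=> u up.
  have Ei : iota 0 m.+1 = 0 :: (iota 1 m.-1 ++ [:: m]).
    by rewrite /= -{1}(prednK m0) iota_r add1n prednK.
  rewrite Ei big_cons big_cat big_seq1 /= (inS_top up m0) addn0.
  rewrite (inS_zero up m0).
  congr (_ + _).
    by case Q: (isQ u) => //; rewrite (lam_zero up Q).
  rewrite (eq_big_seq (fun x => if inS u then (if Qb x u then W L (lam (x :: map (sh x) u)) else 0) else 0)); last first.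
    move=> x; rewrite mem_iota => /andP[x1 x2].
    by rewrite (inS_mid up) //; try lia; case: (inS u).
  case: (inS u); last by rewrite big1.
  by rewrite -big_mkcond sum_children.
have E1 : \sum_(u <- perms_w m) (if isQ u then W L m else 0) = 2 ^ m.-1 * W L m.
  rewrite -(countQ m0) -sum_if_count big_distrl /=; apply: eq_bigr => u _.
  by case: (isQ u); rewrite ?mul1n ?mul0n.
have E2 : \sum_(u <- perms_w m) (if inS u then W L.+1 (lam u) else 0) = A m L.+1.
  by rewrite /A [RHS]big_mkcond.
rewrite -E1 -E2 -big_split /=.
rewrite /A perms_wS big_mkcond big_allpairs_dep exchange_big.
by apply: eq_big_seq => u up; rewrite step.
Qed.

Lemma A1 L : A 1 L = 0.
Proof. by rewrite /A /= big_cons big_nil. Qed.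

Lemma A_closed r L :
  A r.+1 L = \sum_(i < r) 2 ^ i * W (L + r - i.+1) i.+1.
Proof.
elim: r L => [|r IH] L; first by rewrite A1 big_ord0.
rewrite A_rec // IH big_ord_recr /= addnC; congr (_ + _).
  by apply: eq_bigr => i _; congr (_ * W _ _); lia.
by congr (_ * W _ _); lia.
Qed.

Definition V (r d : nat) : nat := \sum_(i < r) 2 ^ i * W (r - i.+1) (d + i).

Lemma V_rec r d : V r.+1 d = W r d + 2 * V r d.+1.
Proof.
rewrite /V big_ord_recl /= expn0 mul1n subn1 /= addn0; congr (_ + _).
rewrite big_distrr /=; apply: eq_bigr => i _.
by rewrite /bump /= expnS mulnA addnS addSn subSS.
Qed.

Lemma W1 k : W 1 k = k.
Proof. by rewrite /= sum_nat_const_nat muln1; lia. Qed.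

Lemma W_step L k : W L.+1 k.+1 = W L.+1 k + W L k.+2.
Proof. by rewrite /= big_nat_recr //=; lia. Qed.

Lemma W_one L : W L.+1 1 = W L 2.
Proof. by rewrite /= big_nat1. Qed.

Lemma Wc L k : 0 < k -> W L.+1 k + 'C(L.*2 + k.+1, L) = 'C(L.*2 + k.+1, L.+1).
Proof.
elim: L k => [|L IHL] k k0.
  by rewrite W1 bin0 bin1 doubleE; lia.
elim: k k0 => [//|k IHk] _.
case: k IHk => [|k] IHk.
  rewrite W_one.
  have H := IHL 2 isT.
  have E1 : (L.+1).*2 + 2 = (L.*2 + 3).+1 by rewrite doubleS; lia.
  rewrite E1 !binS.
  have S : 'C(L.*2 + 2.+1, L.+2) = 'C(L.*2 + 2.+1, L.+1).
    rewrite -bin_sub; last lia.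
    congr binomial; lia.
  rewrite S; lia.
rewrite W_step.
have H1 := IHk isT.
have H2 := IHL k.+3 isT.
have E1 : (L.+1).*2 + k.+3 = (L.*2 + k.+4).+1 by rewrite doubleS; lia.
have E2 : (L.+1).*2 + k.+2 = L.*2 + k.+4 by rewrite doubleS; lia.
rewrite E2 in H1.
rewrite E1 !binS.
lia.
Qed.

Lemma V_closed r d : 0 < d -> V r.+1 d = 'C(r.*2 + d, r).
Proof.
elim: r d => [|r IH] d d0.
  by rewrite V_rec /V big_ord0 muln0 addn0 bin0.
rewrite V_rec IH //.
have H := Wc r d0.
have E : (r.+1).*2 + d = (r.*2 + d.+1).+1 by rewrite doubleS; lia.
rewrite E binS; rewrite ?addnS in H *; lia.
Qed.

Section Link.
Variable k : nat.
Local Notation N := k.+1.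

Definition wd (s : {perm 'I_N}) : seq nat := [seq val (s i) | i <- enum 'I_N].

Lemma size_wd s : size (wd s) = N.
Proof. by rewrite size_map size_enum_ord. Qed.

Lemma wd_nth s (i : 'I_N) : nth 0 (wd s) i = s i.
Proof.
rewrite /wd (nth_map ord0); last by rewrite size_enum_ord.
by rewrite nth_ord_enum.
Qed.

Lemma wd_nth' s i : i < N -> nth 0 (wd s) i = s (inord i).
Proof. by move=> iN; rewrite -(wd_nth s (inord i)) inordK. Qed.

Lemma wd_perms s : wd s \in perms_w N.
Proof.
rewrite perms_wP size_wd eqxx /=; apply/andP; split.
  rewrite map_inj_uniq ?enum_uniq // => i j /val_inj; exact: perm_inj.
by apply/allP; rewrite /wd => _ /mapP[i _ ->]; exact: ltn_ord.
Qed.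

Lemma wd_inj : injective wd.
Proof.
move=> s t E; apply/permP => i; apply/val_inj.
by have := congr1 (fun w => nth 0 w i) E; rewrite /= !wd_nth.
Qed.

Lemma pos_index s (v : 'I_N) : pos s v = index (val v) (wd s).
Proof.
rewrite /pos /wd.
have -> : val v = val (s ((s^-1)%g v)) by rewrite permKV.
rewrite (index_map (f := fun i => val (s i))); last first.
  by move=> i j /val_inj; exact: perm_inj.
by rewrite index_enum_ord.
Qed.

Lemma contains_1243 s : contains_pat s [:: 1; 2; 4; 3] = pat4 P1243 (wd s).
Proof.
apply/idP/idP.
- move=> /existsP[f /forallP H].
  have HH : forall a b : 'I_4, ((a < b) ==> (f a < f b)) &&
      ((s (f a) < s (f b)) == (nth 0 [:: 1; 2; 4; 3] a < nth 0 [:: 1; 2; 4; 3] b)).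
    by move=> a b; exact: (forallP (H a) b).
  pose o0 : 'I_4 := @Ordinal 4 0 isT.
  pose o1 : 'I_4 := @Ordinal 4 1 isT.
  pose o2 : 'I_4 := @Ordinal 4 2 isT.
  pose o3 : 'I_4 := @Ordinal 4 3 isT.
  have /andP[/= p01 /eqP v01] := HH o0 o1.
  have /andP[/= p12 /eqP v12] := HH o1 o2.
  have /andP[/= p23 /eqP v23] := HH o2 o3.
  have /andP[_ /eqP v13] := HH o1 o3.
  have /andP[_ /eqP v32] := HH o3 o2.
  apply/pat4P; exists (f o0), (f o1), (f o2), (f o3).
  rewrite size_wd !wd_nth ltn_ord; split => //.
  by rewrite /P1243 v01 v13 v32.
- move=> /pat4P[a [b [c [d [ab bc cd dN]]]]].
  rewrite size_wd in dN.
  rewrite !wd_nth' ?(ltn_trans cd dN) ?(ltn_trans bc (ltn_trans cd dN))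
     ?(ltn_trans ab (ltn_trans bc (ltn_trans cd dN))) // => HP.
  apply/existsP; exists [ffun i : 'I_4 => (inord (nth 0 [:: a; b; c; d] i) : 'I_N)].
  apply/forallP => i; apply/forallP => j; rewrite !ffunE.
  move: HP; rewrite /P1243.
  have aN : a < N by lia.
  have bN : b < N by lia.
  have cN : c < N by lia.
  case: i => [[|[|[|[|i]]]] Hi] //; case: j => [[|[|[|[|j]]]] Hj] //=;
    rewrite ?inordK // ?eqb_id ?eqbF_neg; lia.
Qed.

Lemma contains_1324 s : contains_pat s [:: 1; 3; 2; 4] = pat4 P1324 (wd s).
Proof.
apply/idP/idP.
- move=> /existsP[f /forallP H].
  have HH : forall a b : 'I_4, ((a < b) ==> (f a < f b)) &&
      ((s (f a) < s (f b)) == (nth 0 [:: 1; 3; 2; 4] a < nth 0 [:: 1; 3; 2; 4] b)).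
    by move=> a b; exact: (forallP (H a) b).
  pose o0 : 'I_4 := @Ordinal 4 0 isT.
  pose o1 : 'I_4 := @Ordinal 4 1 isT.
  pose o2 : 'I_4 := @Ordinal 4 2 isT.
  pose o3 : 'I_4 := @Ordinal 4 3 isT.
  have /andP[/= p01 _] := HH o0 o1.
  have /andP[/= p12 _] := HH o1 o2.
  have /andP[/= p23 _] := HH o2 o3.
  have /andP[_ /eqP v02] := HH o0 o2.
  have /andP[_ /eqP v21] := HH o2 o1.
  have /andP[_ /eqP v13] := HH o1 o3.
  apply/pat4P; exists (f o0), (f o1), (f o2), (f o3).
  rewrite size_wd !wd_nth ltn_ord; split => //.
  by rewrite /P1324 v02 v21 v13.
- move=> /pat4P[a [b [c [d [ab bc cd dN]]]]].
  rewrite size_wd in dN.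
  rewrite !wd_nth' ?(ltn_trans cd dN) ?(ltn_trans bc (ltn_trans cd dN))
     ?(ltn_trans ab (ltn_trans bc (ltn_trans cd dN))) // => HP.
  apply/existsP; exists [ffun i : 'I_4 => (inord (nth 0 [:: a; b; c; d] i) : 'I_N)].
  apply/forallP => i; apply/forallP => j; rewrite !ffunE.
  move: HP; rewrite /P1324.
  have aN : a < N by lia.
  have bN : b < N by lia.
  have cN : c < N by lia.
  case: i => [[|[|[|[|i]]]] Hi] //; case: j => [[|[|[|[|j]]]] Hj] //=;
    rewrite ?inordK // ?eqb_id ?eqbF_neg; lia.
Qed.

Lemma count_link :
  #|[set s : {perm 'I_N} | avoids s [:: 1; 2; 4; 3] && avoids s [:: 1; 3; 2; 4]
      && (pos s ord0 < pos s ord_max)]| = \sum_(w <- perms_w N | inS w) 1.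
Proof.
rewrite -sum1dep_card.
rewrite (eq_bigl (fun s => inS (wd s))); last first.
  move=> s; rewrite /avoids contains_1243 contains_1324 !pos_index /inS /good size_wd.
  by [].
rewrite -(big_map wd (fun w => inS w) (fun _ => 1)).
apply: perm_big.
have U : uniq (map wd (index_enum {perm 'I_N})).
  by rewrite map_inj_uniq ?index_enum_uniq //; exact: wd_inj.
have Sz : size (index_enum {perm 'I_N}) = #|{perm 'I_N}|.
  rewrite -(card_uniqP (index_enum_uniq _)); apply: eq_card => x.
  by rewrite mem_index_enum.
have := @uniq_min_size _ (map wd (index_enum {perm 'I_N})) (perms_w N) U.
case.
- by move=> _ /mapP[s _ ->]; apply: wd_perms.
- by rewrite size_map Sz card_Sn size_perms_w.
move=> _ E.
by apply: uniq_perm => //; exact: perms_w_uniq.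
Qed.
End Link.


Theorem corollary5p8 (n : nat) (hn : (2 <= n)%N) :
  #|[set s : {perm 'I_n.-1.+1} |
      avoids s [:: 1; 2; 4; 3] && avoids s [:: 1; 3; 2; 4]
      && (pos s ord0 < pos s ord_max)%N]| = 'C(2 * n - 3, n - 1).
Proof.
rewrite count_link.
have -> : \sum_(w <- perms_w n.-1.+1 | inS w) 1 = A n.-1.+1 0 by [].
rewrite A_closed.
have -> : \sum_(i < n.-1) 2 ^ i * W (0 + n.-1 - i.+1) i.+1 = V n.-1 1.
  by apply: eq_bigr => i _; rewrite add0n add1n.
case: n hn => [|[|r]] // _.
rewrite [_.+2.-1]/= V_closed //.
have -> : 2 * r.+2 - 3 = r.*2 + 1 by rewrite -mul2n; lia.
have -> : r.+2 - 1 = r.*2 + 1 - r by rewrite -mul2n; lia.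
by rewrite bin_sub // -mul2n; lia.
Qed.
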